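(* Let $n,m\ge1$, $r>0$, let $\varphi_1,\dots,\varphi_n:\mathbb{R}\to[0,\infty)$ be nonnegative functions and $x_1,\dots,x_m\in\mathbb{R}$ such that for each $j$ there is $i$ with $\varphi_i(x_j)>0$. Set $v^1_i=\sqrt{r/n}$ for $i=1,\dots,n$. For $k\ge1$, given $v^k\in[0,\infty)^n$, let $u^k\in[0,\infty)^n$ with $\sum_i(u^k_i)^2=r$ be a point at which $\widehat l^{\,k}(u)=\prod_{j=1}^m\big(\sum_{i=1}^n u_iv^k_i\varphi_i(x_j)\big)$ attains its maximum over the sphere $\{u\in\mathbb{R}^n:\sum_iu_i^2=r\}$; let $\overline\theta^{k+1}>0$ satisfy $(\overline\theta^{k+1})^2\sum_i u^k_iv^k_i=r$ and set $v^{k+1}_i=\overline\theta^{k+1}\sqrt{u^k_iv^k_i}$. Let $P^k=\sum_{i=1}^n u^k_iv^k_i$. Then $\lim_{k\to\infty}P^k=r$; in particular, for every $\varepsilon>0$ there is $k$ with $P^k+\varepsilon\ge r$, so the procedure that stops at the first $k$ with $\sum_i u^k_iv^k_i+\varepsilon\ge r$ terminates after finitely many steps. *)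

(* Defs.v *)
From HB Require Import structures.
From mathcomp Require Import all_boot all_order all_algebra.
From mathcomp Require Import all_classical all_reals.
From mathcomp Require Import all_analysis.
Set Implicit Arguments. Unset Strict Implicit. Unset Printing Implicit Defensive.
Import Order.TTheory GRing.Theory Num.Theory.
Local Open Scope ring_scope.

Definition lhat (R : realType) (n m : nat) (phi : 'I_n -> R -> R) (x : 'I_m -> R)
  (v : 'I_n -> R) (u : 'I_n -> R) : R :=
  \prod_(j < m) \sum_(i < n) u i * v i * phi i (x j).

Definition on_sphere (R : realType) (n : nat) (r : R) (u : 'I_n -> R) : Prop :=
  \sum_(i < n) u i ^+ 2 = r.

(* Main.v *)
Require Import Defs.
From HB Require Import structures.
From mathcomp Require Import all_boot all_order all_algebra.
From mathcomp Require Import all_classical all_reals.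
From mathcomp Require Import all_analysis.
From mathcomp Require Import ring lra.
Import Order.TTheory GRing.Theory Num.Theory numFieldNormedType.Exports.
Local Open Scope classical_set_scope.
Local Open Scope ring_scope.

Theorem lemma7 (R : realType) (n m : nat) (r : R)
  (phi : 'I_n -> R -> R) (x : 'I_m -> R)
  (u v : nat -> 'I_n -> R) :
  (0 < n)%N -> (0 < m)%N -> 0 < r ->
  (forall i t, 0 <= phi i t) ->
  (forall j : 'I_m, exists i : 'I_n, 0 < phi i (x j)) ->
  (forall i, v 1%N i = Num.sqrt (r / n%:R)) ->
  (forall k, (1 <= k)%N ->
     (forall i, 0 <= u k i) /\ on_sphere r (u k) /\
     (forall w : 'I_n -> R, on_sphere r w ->
        lhat phi x (v k) w <= lhat phi x (v k) (u k))) ->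
  (forall k, (1 <= k)%N ->
     exists theta : R, 0 < theta /\
       theta ^+ 2 * (\sum_(i < n) u k i * v k i) = r /\
       (forall i, v k.+1 i = theta * Num.sqrt (u k i * v k i))) ->
  (fun k => \sum_(i < n) u k i * v k i) @ \oo --> r /\
  (forall eps : R, 0 < eps ->
     exists k, (1 <= k)%N /\ r <= \sum_(i < n) u k i * v k i + eps).
Proof.
move=> n0 m0 r0 phi0 phipos Hv1 Hu Hth.
set P := fun k => \sum_(i < n) u k i * v k i.
set M := fun k => lhat phi x (v k) (u k).
have vge0 : forall k i, 0 <= v k.+1 i.
  elim=> [|k IH] i; first by rewrite Hv1 sqrtr_ge0.
  have [t [t0 [_ ->]]] := Hth k.+1 isT.
  by rewrite mulr_ge0 ?sqrtr_ge0 // ltW.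
have uge0 : forall k i, 0 <= u k.+1 i by move=> k; case: (Hu k.+1 isT).
have usph : forall k, on_sphere r (u k.+1) by move=> k; case: (Hu k.+1 isT) => _ [].
have umax : forall k w, on_sphere r w -> lhat phi x (v k.+1) w <= M k.+1.
  by move=> k; case: (Hu k.+1 isT) => _ [].
have vsph : forall k, on_sphere r (v k.+1).
  case=> [|k]; rewrite /on_sphere.
  - under eq_bigr do rewrite Hv1 sqr_sqrtr ?divr_ge0 ?ler0n ?ltW //.
    rewrite sumr_const card_ord -(mulr_natr (r / n%:R)) divfK // pnatr_eq0 -lt0n //.
  - have [t [t0 [Ht Hv]]] := Hth k.+1 isT.
    under eq_bigr do rewrite Hv exprMn sqr_sqrtr ?mulr_ge0 ?uge0 ?vge0 //.
    by rewrite -mulr_sumr.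
have Pler : forall k, P k.+1 <= r.
  move=> k; rewrite /P.
  have H : \sum_(i < n) (u k.+1 i * v k.+1 i) *+ 2
      <= \sum_(i < n) (u k.+1 i ^+ 2 + v k.+1 i ^+ 2).
    apply: ler_sum => i _; have := sqr_ge0 (u k.+1 i - v k.+1 i); rewrite mulr2n; nra.
  move: H; rewrite sumrMnl big_split /= usph vsph mulr2n; lra.
have Mge0 : forall k, 0 <= M k.+1.
  move=> k; apply: prodr_ge0 => j _; apply: sumr_ge0 => i _.
  by rewrite !mulr_ge0.
have key : forall k, exists t2, 1 <= t2 /\ t2 * P k.+1 = r /\ t2 * M k.+1 <= M k.+2.
  move=> k; have [t [t0 [Ht Hv]]] := Hth k.+1 isT.
  have Ppos : 0 < P k.+1.
    have : 0 < t ^+ 2 * P k.+1 by rewrite [P _]/P Ht.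
    by rewrite pmulr_rgt0 ?exprn_gt0.
  have Pl := Pler k.
  exists (t ^+ 2); split; first by rewrite /P in Ppos Pl *; nra.
  split; first exact: Ht.
  apply: le_trans (umax k.+1 (v k.+2) (vsph k.+1)).
  have E : forall i, v k.+2 i * v k.+2 i = t ^+ 2 * (u k.+1 i * v k.+1 i).
    move=> i; rewrite Hv mulrACA -!expr2 sqr_sqrtr //.
    by rewrite mulr_ge0 ?uge0 ?vge0.
  rewrite /lhat (eq_bigr (fun j => t ^+ 2 * \sum_(i < n) u k.+1 i * v k.+1 i * phi i (x j))); last first.
    move=> j _; rewrite mulr_sumr; apply: eq_bigr => i _.
    by rewrite E !mulrA.
  rewrite big_split /= prodr_const card_ord.
  apply: ler_wpM2r; first exact: Mge0.
  have t21 : 1 <= t ^+ 2 by rewrite /P in Ppos Pl *; nra.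
  rewrite -(prednK m0) [_ ^+ m.-1.+1]exprS; apply: ler_peMr; first by rewrite exprn_ge0 // ltW.
  exact: exprn_ege1.
have Mmono : forall k, M k.+1 <= M k.+2.
  move=> k; have [t2 [t1 [_ H]]] := key k.
  apply: le_trans H; have := Mge0 k; nra.
have MgeM1 : forall k, M 1%N <= M k.+1.
  elim=> [|k IH] //; exact: le_trans IH (Mmono k).
have M1pos : 0 < M 1%N.
  apply: (lt_le_trans _ (umax 0%N (v 1%N) (vsph 0%N))).
  rewrite /lhat; apply: prodr_gt0 => j _.
  have [i Hi] := phipos j.
  rewrite (bigD1 i) //=; apply: ltr_wpDr.
    by apply: sumr_ge0 => l _; rewrite !mulr_ge0.
  rewrite Hv1 -expr2 sqr_sqrtr ?divr_ge0 ?ler0n ?ltW //.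
  by rewrite mulr_gt0 // divr_gt0 // ltr0n.
pose B := (\sum_(i < n) \sum_(j < m) phi i (x j)) * r.
have MleB : forall k, M k.+1 <= B ^+ m.
  move=> k; have -> : B ^+ m = \prod_(j < m) B by rewrite prodr_const card_ord.
  rewrite /M /lhat.
  apply: ler_prod => j _; apply/andP; split.
    by apply: sumr_ge0 => l _; rewrite !mulr_ge0.
  apply: (le_trans (y := \sum_(i < n) u k.+1 i * v k.+1 i *
            (\sum_(i < n) \sum_(j < m) phi i (x j)))).
    apply: ler_sum => i _; apply: ler_wpM2l; first by rewrite mulr_ge0.
    rewrite (bigD1 i) //= (bigD1 j) //= -addrA lerDl.
    rewrite addr_ge0 // sumr_ge0 // => l _; rewrite sumr_ge0 //.
  rewrite -mulr_suml /B mulrC; apply: ler_wpM2l; last exact: Pler.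
  by rewrite sumr_ge0 // => l _; rewrite sumr_ge0.
have F : forall k, r - P k.+1 <= r / M 1%N * (M k.+2 - M k.+1).
  move=> k; have [t2 [t1 [Ht HM]]] := key k.
  have Pl := Pler k.
  have h1 : r - P k.+1 <= (t2 - 1) * r by rewrite -Ht; nra.
  have h2 : (t2 - 1) * M 1%N <= M k.+2 - M k.+1.
    have := MgeM1 k; have := Mge0 k; nra.
  apply: (le_trans h1).
  rewrite mulrAC -mulrA mulrC; apply: ler_wpM2l; first exact: ltW.
  by rewrite ler_pdivlMr.
have Mcvg : (fun k => M k.+1) @ \oo --> sup (range (fun k => M k.+1)).
  apply: nondecreasing_cvgn; first exact/nondecreasing_seqP.
  by exists (B ^+ m) => _ [k _ <-].
have Mcvg2 : (fun k => M k.+2) @ \oo --> sup (range (fun k => M k.+1)).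
  by have := Mcvg; rewrite -cvg_shiftS.
have Dcvg : (fun k => M k.+2 - M k.+1) @ \oo --> 0.
  rewrite -(subrr (sup (range (fun k => M k.+1)))); exact: cvgB.
have Pcvg : (fun k => P k.+1) @ \oo --> r.
  apply: (@squeeze_cvgr _ _ _ _ (fun k => r - r / M 1%N * (M k.+2 - M k.+1)) (fun=> r)).
  - apply: filterE => k; apply/andP; split; last exact: Pler.
    have := F k; lra.
  - have H : (fun k => r - r / M 1%N * (M k.+2 - M k.+1)) @ \oo --> r - r / M 1%N * 0.
      apply: cvgB; first exact: cvg_cst.
      apply: cvgM; first exact: cvg_cst.
      exact: Dcvg.
    by rewrite mulr0 subr0 in H.
  - exact: cvg_cst.
have Hc : P @ \oo --> r by rewrite -cvg_shiftS.
split; first exact: Hc.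
move=> eps e0.
have [N _ HN] : \forall t \near \oo, `|r - P t| < eps.
  by apply: (cvgrPdist_lt _ _).1 Hc eps e0.
exists N.+1; split => //.
have := HN N.+1 (leqnSn N); rewrite /= => H.
have := ler_norm (r - P N.+1); rewrite /P in H *; lra.
Qed.
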